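(* Let $n\ge 1$, let $L>0$ and let $D\subseteq\mathbb{R}$ be compact. Let $T$ be an input-dependent CPTP map on $n$ qubits, i.e. for each $x\in D\cap[-L,L]$, $T(x)$ is a completely positive trace-preserving linear map on the space of $2^n\times 2^n$ complex matrices. Suppose there is $\epsilon$ with $0<\epsilon\le 1$ such that for all $x\in D\cap[-L,L]$, $$\|T(x)|_{H_0(2^n)}\|_{2-2}:=\sup_{A\in H_0(2^n),\,A\neq 0}\frac{\|T(x)A\|_2}{\|A\|_2}\le 1-\epsilon,$$ where $H_0(2^n)$ is the real vector space of $2^n\times 2^n$ traceless Hermitian matrices. Then $T$ is convergent with respect to $K_L(D)$: there exists a sequence $\{\delta_k\}_{k>0}$ with $\lim_{k\to\infty}\delta_k=0$ such that for every input sequence $u=\{u_k\}_{k\ge 1}$ with $u_k\in D\cap[-L,L]$ for all $k$, and any two sequences of density operators $\{\rho_{j,k}\}_{k\ge 0}$ ($j=1,2$) satisfying $\rho_{j,k}=T(u_k)\rho_{j,k-1}$ for $k\ge 1$, one has $\|\rho_{1,k}-\rho_{2,k}\|_2\le\delta_k$ for all $k>0$. Moreover, any pair of initial density operators converge uniformly to one another under $T$ (i.e. the sequence $\delta_k$ can be chosen independent of the initial density operators and of the input sequence).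
   Context: $\|\cdot\|_2$ denotes the Schatten 2-norm (Hilbert–Schmidt norm) $\|A\|_2=\sqrt{{\rm Tr}(A^*A)}$. A density operator is a positive semidefinite $2^n\times 2^n$ matrix of unit trace. $K_L(D)$ denotes the set of real sequences $u=\{u_k\}_{k\in\mathbb{Z}}$ with $u_k\in D\cap[-L,L]$ for all $k$. *)

(* Defs.v *)
From HB Require Import structures.
From mathcomp Require Import all_boot all_order all_algebra.
From mathcomp Require Import all_classical all_reals all_analysis.
From mathcomp Require Import complex.
Set Implicit Arguments. Unset Strict Implicit. Unset Printing Implicit Defensive.
Import Order.TTheory GRing.Theory Num.Theory.
Local Open Scope ring_scope.
Local Open Scope complex_scope.

Section QDefs.
Variable R : realType.
Local Notation C := R[i].

Definition qmx (n : nat) := 'M[C]_(2 ^ n).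

Definition adjmx (m : nat) (A : 'M[C]_m) : 'M[C]_m := \matrix_(i, j) (A j i)^*.

Definition hermitian (m : nat) (A : 'M[C]_m) : Prop := adjmx A = A.

(* positive semidefinite operator on C^I, I a finite index type:
   <v, A v> >= 0 for every vector v (order of the num field C[i]) *)
Definition psdF (I : finType) (A : I -> I -> C) : Prop :=
  forall v : I -> C, 0 <= \sum_(i : I) \sum_(j : I) (v i)^* * A i j * v j.

Definition psd (m : nat) (A : 'M[C]_m) : Prop := psdF (fun i j => A i j).

Definition density (m : nat) (A : 'M[C]_m) : Prop := psd A /\ \tr A = 1.

Definition hsnorm (m : nat) (A : 'M[C]_m) : R :=
  Num.sqrt (complex.Re (\tr (adjmx A *m A))).

Definition mxlinear (m : nat) (T : 'M[C]_m -> 'M[C]_m) : Prop :=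
  forall (a : C) (A B : 'M[C]_m), T (a *: A + B) = a *: T A + T B.

(* complete positivity: for every k, id_k (x) T maps positive semidefinite
   operators on C^k (x) C^m to positive semidefinite ones.  An operator on
   C^k (x) C^m is given as a k x k block family X of m x m matrices, with
   entries indexed by pairs (block index, inner index). *)
Definition completely_positive (m : nat) (T : 'M[C]_m -> 'M[C]_m) : Prop :=
  forall (k : nat) (X : 'I_k -> 'I_k -> 'M[C]_m),
    psdF (fun p q : 'I_k * 'I_m => X p.1 q.1 p.2 q.2) ->
    psdF (fun p q : 'I_k * 'I_m => T (X p.1 q.1) p.2 q.2).

Definition trace_preserving (m : nat) (T : 'M[C]_m -> 'M[C]_m) : Prop :=
  forall A, \tr (T A) = \tr A.

Definition CPTP (m : nat) (T : 'M[C]_m -> 'M[C]_m) : Prop :=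
  [/\ mxlinear T, completely_positive T & trace_preserving T].

Definition traceless_herm (m : nat) (A : 'M[C]_m) : Prop :=
  hermitian A /\ \tr A = 0.

Definition inDL (D : set R) (L x : R) : Prop := D x /\ - L <= x <= L.

End QDefs.

(* Main.v *)
Require Import Defs.
From HB Require Import structures.
From mathcomp Require Import all_boot all_order all_algebra.
From mathcomp Require Import all_classical all_reals all_analysis.
From mathcomp Require Import complex.
From mathcomp Require Import ring.
Import Order.TTheory GRing.Theory Num.Theory.
Import numFieldNormedType.Exports.
Local Open Scope classical_set_scope.
Local Open Scope ring_scope.

Section Helpers.
Variable R : realType.
Local Notation C := R[i].

Lemma sum1P (I : finType) (V : nmodType) (i : I) (F : I -> V) :
  (forall l, l != i -> F l = 0) -> \sum_l F l = F i.
Proof. by move=> H; rewrite (bigD1 i) //= big1 ?addr0. Qed.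

Lemma sum2P (I : finType) (V : nmodType) (i j : I) (F : I -> V) :
  i != j -> (forall l, l != i -> l != j -> F l = 0) -> \sum_l F l = F i + F j.
Proof.
move=> ij H; rewrite (bigD1 i) //= (bigD1 j) /=; last by rewrite eq_sym ij.
by rewrite big1 ?addr0 // => l /andP [] /H.
Qed.

Lemma psd_diag m (A : 'M[C]_m) i : psd A -> 0 <= A i i.
Proof.
move=> /(_ (fun k => (k == i)%:R)).
rewrite (@sum1P _ _ i); last first.
  by move=> l /negbTE li; apply: big1 => k _; rewrite li conjC0 !mul0r.
rewrite (@sum1P _ _ i); last by move=> l /negbTE li; rewrite li !mulr0.
by rewrite eqxx conjC1 mul1r mulr1.
Qed.

Lemma psd_form2 m (A : 'M[C]_m) i j (a b : C) : psd A -> i != j ->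
  0 <= a^* * a * A i i + a^* * b * A i j + b^* * a * A j i + b^* * b * A j j.
Proof.
move=> /(_ (fun k => (k == i)%:R * a + (k == j)%:R * b)) H ij.
have ji : j != i by rewrite eq_sym.
rewrite (@sum2P _ _ _ _ _ ij) in H; last first.
  move=> l /negbTE li /negbTE lj; apply: big1 => k _.
  by rewrite li lj !mul0r addr0 conjC0 !mul0r.
rewrite !(@sum2P _ _ _ _ _ ij) in H; try by move=> l /negbTE li /negbTE lj; rewrite li lj !mul0r addr0 mulr0.
move: H; rewrite !eqxx (negbTE ij) (negbTE ji) !mul0r !mul1r !addr0 !add0r.
idtac.
move=> H; apply: (le_trans H); rewrite le_eqVlt; apply/orP; left; apply/eqP; ring.
Qed.

Lemma psd_herm m (A : 'M[C]_m) i j : psd A -> (A j i)^* = A i j.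
Proof.
move=> hA; case: (eqVneq i j) => [<-|ij]; first exact: geC0_conj (psd_diag _ _ i hA).
have e1 := geC0_conj (psd_form2 _ _ _ _ 1 1 hA ij).
have e2 := geC0_conj (psd_form2 _ _ _ _ 1 'i hA ij).
have di := geC0_conj (psd_diag _ _ i hA).
have dj := geC0_conj (psd_diag _ _ j hA).
move: e1 e2; rewrite !rmorphD !rmorphM /= !conjCK conjCi !conjC1 ?rmorphN /= ?conjCi ?opprK.
rewrite ?di ?dj => e1 e2.
set p := A i j in e1 e2 *; set q := A j i in e1 e2 *.
set P := p^* in e1 e2 *; set Q := q^* in e1 e2 *.
apply/eqP; rewrite eq_sym -subr_eq0; apply/eqP.
have : 2 * 'i * (Q - p) = 0.
  move/eqP: e1; rewrite -subr_eq0 => /eqP e1.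
  move/eqP: e2; rewrite -subr_eq0 => /eqP e2.
  rewrite -[RHS](addr0 0) -[X in _ = X + _](mulr0 'i) -{1}e1 -e2; ring.
move/eqP; rewrite !mulf_eq0 (negbTE (neq0Ci _)) pnatr_eq0 /= subr_eq0 => /eqP ->.
by rewrite subrr.
Qed.

Lemma density_diag_le1 m (A : 'M[C]_m) j : density A -> A j j <= 1.
Proof.
move=> [hA tA]; move: tA; rewrite /mxtrace (bigD1 j) //= => <-.
by rewrite lerDl; apply: sumr_ge0 => k _; apply: psd_diag.
Qed.

Lemma density_entry m (A : 'M[C]_m) i j : density A -> (A i j)^* * A i j <= 1.
Proof.
move=> dA; have [hA tA] := dA.
case: (eqVneq i j) => [<-|ij].
  rewrite (geC0_conj (psd_diag _ _ i hA)).
  have h0 := psd_diag _ _ i hA; have h1 := density_diag_le1 _ _ i dA.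
  by apply: (le_trans (ler_piMr h0 h1)).
have hf := psd_form2 _ _ _ _ 1 (- (A i j)^*) hA ij.
have hji : A j i = (A i j)^* by rewrite psd_herm.
rewrite hji rmorphN /= conjCK conjC1 !mul1r in hf.
set c := A i j in hf *.
have e : A i i + - c^* * c + - c * 1 * c^* + - c * - c^* * A j j
   = A i i - (c^* * c) * (2 - A j j) by ring.
rewrite e in hf.
rewrite subr_ge0 in hf.
have hN : 0 <= c^* * c by rewrite mulrC mul_conjC_ge0.
have h2 : 1 <= 2 - A j j.
  have h := density_diag_le1 _ _ j dA; rewrite -subr_ge0.
  have -> : 2 - A j j - 1 = 1 - A j j by ring.
  by rewrite subr_ge0.
have h3 : c^* * c <= c^* * c * (2 - A j j) by rewrite ler_peMr.
apply: (le_trans h3).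
exact: (le_trans hf (density_diag_le1 _ _ i dA)).
Qed.

Lemma diff_entry m (A B : 'M[C]_m) i j : density A -> density B ->
  ((A - B) j i)^* * (A - B) j i <= 4.
Proof.
move=> dA dB; rewrite !mxE.
have ha := density_entry _ _ j i dA; have hb := density_entry _ _ j i dB.
set a := A j i in ha *; set b := B j i in hb *.
have e : (a - b)^* * (a - b) = 2 * (a^* * a + b^* * b) - (a + b)^* * (a + b).
  rewrite !rmorphB !rmorphD /=; ring.
rewrite e.
have h0 : 0 <= (a + b)^* * (a + b) by rewrite mulrC mul_conjC_ge0.
have h1 : 2 * (a^* * a + b^* * b) - (a + b)^* * (a + b) <= 2 * (a^* * a + b^* * b).
  by rewrite lerBlDr lerDl.
apply: (le_trans h1).
have -> : (4 : C) = 2 * (1 + 1) by ring.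
by rewrite ler_wpM2l // lerD.
Qed.

Lemma diff_hs m (A B : 'M[C]_m) : density A -> density B ->
  hsnorm (A - B) <= Num.sqrt (complex.Re ((4 : C) *+ m *+ m)).
Proof.
move=> dA dB; rewrite /hsnorm; apply: ler_wsqrtr.
suff h : \tr (adjmx (A - B) *m (A - B)) <= (4 : C) *+ m *+ m.
  by move: h; rewrite lecE => /andP [].
have -> : (4 : C) *+ m *+ m = \sum_(i < m) \sum_(j < m) 4.
  by rewrite !sumr_const !card_ord.
rewrite /mxtrace; apply: ler_sum => i _; rewrite mxE; apply: ler_sum => j _.
rewrite mxE; exact: diff_entry.
Qed.

Lemma diff_tlh m (A B : 'M[C]_m) : density A -> density B -> traceless_herm (A - B).
Proof.
move=> [hA tA] [hB tB]; split; last by rewrite linearB /= tA tB subrr.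
apply/matrixP => i j; rewrite !mxE.
change (Num.conj (A j i - B j i) = A i j - B i j).
by rewrite rmorphB /= !psd_herm.
Qed.
End Helpers.

Theorem theorem1 (R : realType) (n : nat) (L : R) (D : set R)
    (T : R -> qmx R n -> qmx R n) (eps : R) :
  (0 < n)%N -> 0 < L -> compact D ->
  (forall x, inDL D L x -> CPTP (T x)) ->
  0 < eps -> eps <= 1 ->
  (forall x, inDL D L x ->
     forall A : qmx R n, traceless_herm A ->
       hsnorm (T x A) <= (1 - eps) * hsnorm A) ->
  exists delta : nat -> R,
    delta @ \oo --> 0 /\
    forall (u : nat -> R), (forall k, (0 < k)%N -> inDL D L (u k)) ->
    forall rho1 rho2 : nat -> qmx R n,
      (forall k, density (rho1 k)) -> (forall k, density (rho2 k)) ->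
      (forall k, (0 < k)%N -> rho1 k = T (u k) (rho1 k.-1)) ->
      (forall k, (0 < k)%N -> rho2 k = T (u k) (rho2 k.-1)) ->
      forall k, (0 < k)%N -> hsnorm (rho1 k - rho2 k) <= delta k.
Proof.
move=> _ _ _ hT e0 e1 hC.
set M := Num.sqrt (complex.Re ((4 : R[i]) *+ (2 ^ n) *+ (2 ^ n))).
exists (fun k => (1 - eps) ^+ k * M); split.
  rewrite -(mul0r M); apply: cvgM; last exact: cvg_cst.
  apply: cvg_expr.
  by rewrite ger0_norm ?subr_ge0 // ltrBlDr ltrDl.
move=> u hu r1 r2 d1 d2 s1 s2 k _.
elim: k => [|k IH]; first by rewrite expr0 mul1r; exact: diff_hs.
have [lin _ _] := hT _ (hu k.+1 isT).
have -> : r1 k.+1 - r2 k.+1 = T (u k.+1) (r1 k - r2 k).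
  rewrite s1 // s2 //=; have h := lin (-1) (r2 k) (r1 k).
  rewrite !scaleN1r [- r2 k + _]addrC [- T _ _ + _]addrC in h; by rewrite h.
apply: (le_trans (hC (u k.+1) (hu k.+1 isT) (r1 k - r2 k) (@diff_tlh _ _ _ _ (d1 k) (d2 k)))).
rewrite exprS -mulrA ler_wpM2l // subr_ge0 //.
Qed.
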